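(* If a finite group $G$ has a Sylow tower, then $\Gamma_s(G)=\Gamma_{Nc}(G)=\Gamma_H(G)$.
   Context: All groups are finite; $\pi(G)$ is the set of prime divisors of $|G|$. A group $G$ has a Sylow tower if there is an ordering $p_1,\dots,p_k$ of $\pi(G)$ and a normal series $1=G_0\le G_1\le\cdots\le G_k=G$ of $G$ such that each $G_i/G_{i-1}$ is isomorphic to a Sylow $p_i$-subgroup of $G$. Graphs are directed (vertex set plus set of ordered pairs). $O_{p',p}(G)$ is the largest normal $p$-nilpotent subgroup. The Hawkes graph $\Gamma_H(G)$ has vertex set $\pi(G)$ and edge $(p,q)$ iff $q\in\pi(G/O_{p',p}(G))$. The Sylow graph $\Gamma_s(G)$ has vertex set $\pi(G)$ and edge $(p,q)$ iff $q\in\pi(N_G(P)/PC_G(P))$ for some Sylow $p$-subgroup $P$. A Schmidt $(p,q)$-group is a non-nilpotent group all of whose proper subgroups are nilpotent, of order divisible exactly by the primes $p,q$, with a normal Sylow $p$-subgroup; $\Gamma_{Nc}(G)$ has vertex set $\pi(G)$ and edge $(p,q)$ iff $G$ has a Schmidt $(p,q)$-subgroup. *)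

(* Defs.v *)
From mathcomp Require Import all_boot all_fingroup all_solvable.
Set Implicit Arguments. Unset Strict Implicit. Unset Printing Implicit Defensive.
Local Open Scope group_scope.

Definition digraph := (pred nat * rel nat)%type.

Definition digraph_eq (g1 g2 : digraph) : Prop :=
  (forall p, g1.1 p = g2.1 p) /\ (forall p q, g1.2 p q = g2.2 p q).

Section Defs.
Variable gT : finGroupType.

(* G has a Sylow tower: an ordering s of pi(G) and a normal series
   1 = G_0 <= G_1 <= ... <= G_k = G (each G_i normal in G) with
   G_i / G_{i-1} isomorphic to a Sylow p_i-subgroup of G. *)
Definition has_sylow_tower (G : {group gT}) : Prop :=
  exists (s : seq nat) (Gs : seq {group gT}),
    [/\ perm_eq s (primes #|G|),
        size Gs = (size s).+1,
        ((nth 1%G Gs 0 :=: 1) /\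
        (nth 1%G Gs (size s) :=: G)),
        (forall i, i <= size s -> nth 1%G Gs i <| G) &
        (forall i, i < size s ->
           nth 1%G Gs i \subset nth 1%G Gs i.+1 /\
           exists2 P : {group gT}, P \in 'Syl_(nth 0 s i)(G) &
             (nth 1%G Gs i.+1 / nth 1%G Gs i) \isog P)].

Definition hawkes_graph (G : {group gT}) : digraph :=
  (fun p => p \in primes #|G|,
   fun p q => [&& p \in primes #|G|, q \in primes #|G|
                 & q \in primes #|G / 'O_{p^', p}(G)|]).

Definition sylow_graph (G : {group gT}) : digraph :=
  (fun p => p \in primes #|G|,
   fun p q => [&& p \in primes #|G|, q \in primes #|G|
     & [exists P : {group gT}, (P \in 'Syl_p(G)) &&
          (q \in primes #|'N_G(P) / (P * 'C_G(P))|)]]).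

Definition schmidt_pq (p q : nat) (H : {group gT}) : bool :=
  [&& ~~ nilpotent H,
      [forall K : {group gT}, (K \proper H) ==> nilpotent K],
      [&& p \in primes #|H|, q \in primes #|H|
        & all (fun r => (r == p) || (r == q)) (primes #|H|)]
    & [exists P : {group gT}, (P \in 'Syl_p(H)) && (P <| H)]].

Definition schmidt_graph (G : {group gT}) : digraph :=
  (fun p => p \in primes #|G|,
   fun p q => [&& p \in primes #|G|, q \in primes #|G|
     & [exists H : {group gT}, (H \subset G) && schmidt_pq p q H]]).

End Defs.

(* Main.v *)
Require Import Defs.
From mathcomp Require Import all_boot all_fingroup all_solvable.
Set Implicit Arguments. Unset Strict Implicit. Unset Printing Implicit Defensive.
Local Open Scope group_scope.

Lemma pq_nat1 (p q n : nat) : p != q -> p.-nat n -> q.-nat n -> n = 1%N.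
Proof.
move=> npq pn qn; apply: (pnat_1 pn); apply: sub_in_pnat qn => r _.
by rewrite !inE => /eqP->; rewrite eq_sym.
Qed.

Lemma tower_data gT (G : {group gT}) p : has_sylow_tower G -> p \in primes #|G| ->
  exists M L P : {group gT},
    [/\ M <| G, L <| G, p^'.-group M, p.-Sylow(G) P & M * P = L].
Proof.
case=> s [Gs [ps sz [G0 Gk] nG sub]] pG.
have ps' : p \in s by rewrite (perm_mem ps).
have ilt : index p s < size s by rewrite index_mem.
have nthp : nth 0%N s (index p s) = p := nth_index 0%N ps'.
have [sML [P0 sylP0 iso]] := sub _ ilt; rewrite nthp inE in sylP0.
set M := nth 1%G Gs (index p s) in sML iso.
set L := nth 1%G Gs (index p s).+1 in sML iso.
have nM : M <| G := nG _ (ltnW ilt).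
have nL : L <| G := nG _ ilt.
have nML : L \subset 'N(M) := subset_trans (normal_sub nL) (normal_norm nM).
have cardL : #|L| = (#|M| * #|P0|)%N.
  by rewrite -(card_isog iso) card_quotient // Lagrange.
have P0G : #|P0| = (#|G|`_p)%N := card_Hall sylP0.
have dvdLG : #|L| %| #|G| := cardSg (normal_sub nL).
have pP0 : (#|P0|`_p)%N = #|P0| := part_pnat_id (pHall_pgroup sylP0).
have Lp : (#|L|`_p)%N = ((#|M|`_p)%N * #|P0|)%N by rewrite cardL partnM // pP0.
have Mp1 : (#|M|`_p)%N = 1%N.
  have := dvdn_leq (part_gt0 p #|G|) (partn_dvd p (cardG_gt0 G) dvdLG).
  rewrite Lp P0G -[X in (_ <= X)%N]mul1n leq_pmul2r ?part_gt0 // => le1.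
  by apply/eqP; rewrite eqn_leq le1 part_gt0.
have p'M : p^'.-group M by rewrite /pgroup -partn_eq1 ?Mp1.
have [P sylP] := Sylow_exists p L.
have sylPG : p.-Sylow(G) P.
  rewrite pHallE (subset_trans (pHall_sub sylP) (normal_sub nL)) /=.
  by rewrite (card_Hall sylP) Lp Mp1 mul1n P0G.
exists M, L, P; split => //.
apply/eqP; rewrite eqEcard mulG_subG sML (pHall_sub sylP) /=.
rewrite TI_cardMg; last first.
  by apply: coprime_TIg; rewrite coprime_sym (pnat_coprime (pHall_pgroup sylP)).
by rewrite cardL (card_Hall sylPG) P0G.
Qed.

Lemma L_sub_O gT (G M L P : {group gT}) (p : nat) :
  M <| G -> L <| G -> p^'.-group M -> p.-Sylow(G) P -> M * P = L ->
  L \subset 'O_{p^', p}(G).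
Proof.
move=> nM nL p'M sylP defL.
set Np := 'O_p^'(G).
have sMN : M \subset Np := pcore_max p'M nM.
have nNG : G \subset 'N(Np) := normal_norm (pcore_normal _ _).
have sLG := normal_sub nL.
have nNL : L \subset 'N(Np) := subset_trans sLG nNG.
have sNO : Np \subset 'O_{p^', p}(G).
  by have := pseries_sub_catl [:: p^'] [:: (p : nat_pred)] G; rewrite pseries1.
rewrite -(quotientSGK nNL sNO) quotient_pseries2.
apply: pcore_max; last exact: quotient_normal.
change (p.-group (L / Np)); rewrite -defL quotientMl ?(subset_trans (normal_sub nM) nNG) // quotientS1 // mul1g.
exact: quotient_pgroup (pHall_pgroup sylP).
Qed.

Lemma sub1_card gT (H : {group gT}) : #|H| = 1%N -> H \subset [1].
Proof. by move=> h; rewrite (card_le1_trivg (eq_leq h)). Qed.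

Lemma H_to_S gT (G : {group gT}) (p q : nat) : has_sylow_tower G -> p \in primes #|G| ->
  q \in primes #|G / 'O_{p^', p}(G)| ->
  [exists P : {group gT}, (P \in 'Syl_p(G)) && (q \in primes #|'N_G(P) / (P * 'C_G(P))|)].
Proof.
move=> tw pG qGO.
have qpr : prime q by move: qGO; rewrite mem_primes => /andP[].
have [M [L [P [nM nL p'M sylP defL]]]] := tower_data tw pG.
have sLO := L_sub_O nM nL p'M sylP defL.
apply/existsP; exists P; rewrite inE sylP /=.
apply: contraTT qGO => qN.
have nsOG : 'O_{p^', p}(G) <| G := pseries_normal _ _.
have sPL : P \subset L by rewrite -defL mulG_subr.
have sPG := pHall_sub sylP.
have sylPL : p.-Sylow(L) P := pHall_subl sPL (normal_sub nL) sylP.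
have frat : L * 'N_G(P) = G := Frattini_arg nL sylPL.
have sPN : P \subset 'N_G(P) by rewrite subsetI sPG normG.
have sNG : 'N_G(P) \subset G := subsetIl _ _.
have sylPN : p.-Sylow('N_G(P)) P := pHall_subl sPN sNG sylP.
have sNO : 'O_p^'(G) \subset 'O_{p^', p}(G).
  by have := pseries_sub_catl [:: p^'] [:: (p : nat_pred)] G; rewrite pseries1.
suff [Q sylQ sQO] : exists2 Q : {group gT}, q.-Sylow('N_G(P)) Q & Q \subset 'O_{p^', p}(G).
  have nOG := normal_norm nsOG.
  rewrite card_quotient // mem_primes qpr indexg_gt0 /= -p'natE //.
  have defG : 'O_{p^', p}(G) * 'N_G(P) = G.
    apply/eqP; rewrite eqEsubset mulG_subG (normal_sub nsOG) sNG /=.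
    by rewrite -{1}frat mulSg.
  rewrite -{1}defG indexMg -indexgI.
  have sQNO : Q \subset 'N_G(P) :&: 'O_{p^', p}(G) by rewrite subsetI (pHall_sub sylQ).
  apply: pnat_dvd (indexgS _ sQNO) _.
  by case/and3P: sylQ.
case: (eqVneq q p) => [-> | nqp].
  by exists P => //; apply: subset_trans sPL sLO.
have [Q sylQ] := Sylow_exists q 'N_G(P).
exists Q => //.
have sQN := pHall_sub sylQ.
have qQ := pHall_pgroup sylQ.
have nCN : 'N_G(P) \subset 'N('C_G(P)).
  by rewrite normsI ?(subset_trans sNG (normG G)) // norms_cent // subsetIr.
have nCP : P \subset 'N('C_G(P)) := subset_trans sPN nCN.
have defD : P * 'C_G(P) = (P <*> 'C_G(P))%G by rewrite /= norm_joinEl.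
have nDN : 'N_G(P) \subset 'N(P <*> 'C_G(P)).
  by rewrite norm_joinEl // normsM // subsetIr.
have qN' : q^'.-nat #|'N_G(P) / (P <*> 'C_G(P))|.
  rewrite p'natE //; apply: contra qN => qd.
  by rewrite defD mem_primes qpr cardG_gt0 qd.
have sQD : Q \subset P <*> 'C_G(P).
  rewrite -(quotient_sub1 (subset_trans sQN nDN)).
  apply: sub1_card.
  exact: pnat_1 (quotient_pgroup _ qQ) (pnat_dvd (cardSg (quotientS _ sQN)) qN').
have nCQ : Q \subset 'N('C_G(P)) := subset_trans sQN nCN.
have sQC : Q \subset 'C_G(P).
  rewrite -(quotient_sub1 nCQ).
  have sQPC : Q / 'C_G(P) \subset P / 'C_G(P).
    by rewrite -(quotientMidr _ P) -norm_joinEl // quotientS.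
  apply: sub1_card.
  exact: pq_nat1 nqp (quotient_pgroup _ qQ)
           (pnat_dvd (cardSg sQPC) (quotient_pgroup _ (pHall_pgroup sylP))).
have sCN : 'C_G(P) \subset 'N_G(P) by rewrite setIS // cent_sub.
have hallZ : p.-Hall('C_G(P)) (P :&: 'C_G(P)) :=
  setI_normal_Hall (normalSG sPG) sylPN sCN.
have nZC : (P :&: 'C_G(P))%G <| 'C_G(P).
  by rewrite /= setIC; apply: normalGI sCN (normalSG sPG).
have /splitsP[K /complP[tiZK defC]] :=
  SchurZassenhaus_split (pHall_Hall hallZ) nZC.
have sKC : K \subset 'C_G(P) by rewrite -defC mulG_subr.
have cKP : P \subset 'C(K) by rewrite centsC (subset_trans sKC) ?subsetIr.
have nKC : 'C_G(P) \subset 'N(K).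
  rewrite -defC mulG_subG normG andbT.
  exact: cents_norm (subset_trans (subsetIl _ _) cKP).
have cardC : #|'C_G(P)| = (#|P :&: 'C_G(P)| * #|K|)%N.
  by rewrite -{1}defC (TI_cardMg tiZK).
have iCZ : #|'C_G(P) : P :&: 'C_G(P)| = #|K|.
  apply/eqP; rewrite -(eqn_pmul2l (cardG_gt0 (P :&: 'C_G(P))%G)).
  by rewrite (Lagrange (pHall_sub hallZ)) cardC.
have iCK : #|'C_G(P) : K| = #|P :&: 'C_G(P)|.
  apply/eqP; rewrite -(eqn_pmul2l (cardG_gt0 K)).
  by rewrite (Lagrange sKC) cardC mulnC.
have hallK : p^'.-Hall('C_G(P)) K.
  rewrite /pHall sKC /= iCK pnatNK; apply/andP; split; last exact: (pHall_pgroup hallZ).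
  by rewrite /pgroup -iCZ; case/and3P: hallZ.
have nsKC : K <| 'C_G(P) by rewrite /normal sKC nKC.
have sQK : Q \subset K.
  rewrite (sub_normal_Hall hallK nsKC sQC).
  apply: sub_in_pnat qQ => r _; rewrite !inE => /eqP->; exact: nqp.
have defK : 'O_p^'('C_G(P)) = K := normal_Hall_pcore hallK nsKC.
have nKN : 'N_G(P) \subset 'N(K) by rewrite -defK (char_norm_trans (pcore_char _ _) nCN).
have nMG := normal_norm nM.
have sKG : K \subset G := subset_trans sKC (subsetIl _ _).
have p'X : p^'.-group (M <*> K).
  by rewrite norm_joinEr ?(subset_trans sKG nMG) // pgroupM p'M (pHall_pgroup hallK).
have nsXG : M <*> K <| G.
  rewrite /normal join_subG (normal_sub nM) sKG /=.
  apply: (subset_trans (_ : G \subset L * 'N_G(P))); first by rewrite frat.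
  rewrite -defL; apply: mul_subG; first apply: mul_subG.
  - exact: subset_trans (joing_subl M K) (normG _).
  - exact: normsY (subset_trans sPG nMG) (cents_norm cKP).
  - exact: normsY (subset_trans sNG nMG) nKN.
have sXO : M <*> K \subset 'O_p^'(G) := pcore_max p'X nsXG.
exact: subset_trans sQK (subset_trans (joing_subr M K) (subset_trans sXO sNO)).
Qed.

Lemma N_to_H gT (G H : {group gT}) (p q : nat) : H \subset G -> schmidt_pq p q H ->
  q \in primes #|G / 'O_{p^', p}(G)|.
Proof.
move=> sHG /and4P[nnil _ /and3P[pH qH allH] /existsP[P1 /andP[sylP1 nP1]]].
rewrite inE in sylP1.
have qpr : prime q by move: qH; rewrite mem_primes => /andP[].
apply: contraR nnil => qO.
have piH : forall r, r \in \pi(H) -> (r == p) || (r == q).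
  by move=> r; rewrite /pi_of inE => /(allP allH).
case: (eqVneq p q) => [epq | npq].
  apply: (pgroup_nil (p:=p)); rewrite /pgroup /pnat cardG_gt0 /=.
  apply/allP => r rH; have := allP allH r rH; rewrite -epq orbb.
  by rewrite inE.
have [Q sylQ] := Sylow_exists q H.
have sQH := pHall_sub sylQ.
have sQG := subset_trans sQH sHG.
have nOG : G \subset 'N('O_{p^', p}(G)) := normal_norm (pseries_normal _ _).
have sQO : Q \subset 'O_{p^', p}(G).
  rewrite -(quotient_sub1 (subset_trans sQG nOG)); apply: sub1_card.
  apply: pnat_1 (quotient_pgroup _ (pHall_pgroup sylQ)) (pnat_dvd (cardSg (quotientS _ sQG)) _).
  by rewrite p'natE //; apply: contra qO => d; rewrite mem_primes qpr cardG_gt0 d.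
have nNG : G \subset 'N('O_p^'(G)) := normal_norm (pcore_normal _ _).
have sQN : Q \subset 'O_p^'(G).
  rewrite -(quotient_sub1 (subset_trans sQG nNG)); apply: sub1_card.
  apply: pq_nat1 npq _ (quotient_pgroup _ (pHall_pgroup sylQ)).
  apply: pnat_dvd (cardSg (quotientS _ sQO)) _.
  have := pcore_pgroup p (G / 'O_p^'(G))%G.
  by rewrite -quotient_pseries2.
have nsHN : H :&: 'O_p^'(G) <| H := normalGI sHG (pcore_normal _ _).
have sQHN : Q \subset H :&: 'O_p^'(G) by rewrite subsetI sQH sQN.
have qHN : q.-group (H :&: 'O_p^'(G)).
  have p'HN : p^'.-group (H :&: 'O_p^'(G)) := pgroupS (subsetIr _ _) (pcore_pgroup _ _).
  apply: sub_in_pnat p'HN => r rHN; rewrite !inE => nrp.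
  have := piH r (piSg (subsetIl H 'O_p^'(G)) rHN).
  by rewrite (negbTE nrp).
have defQ : (H :&: 'O_p^'(G))%G :=: Q := sub_pHall sylQ qHN sQHN (subsetIl _ _).
have nQH : Q <| H by rewrite -defQ.
have copQP : coprime #|Q| #|P1|.
  apply: (sub_pnat_coprime _ (pHall_pgroup sylQ) (pHall_pgroup sylP1)).
  by move=> r; rewrite !inE => /eqP->.
have cQP : Q \subset 'C(P1).
  apply/commG1P; apply/trivgP; rewrite -(coprime_TIg copQP).
  apply: commg_subI; rewrite subsetI subxx /=.
    exact: subset_trans sQH (normal_norm nP1).
  exact: subset_trans (pHall_sub sylP1) (normal_norm nQH).
have defH : P1 * Q = H.
  apply/eqP; rewrite eqEcard mulG_subG (pHall_sub sylP1) sQH /=.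
  rewrite TI_cardMg; last by apply: coprime_TIg; rewrite coprime_sym.
  have e : (#|H|`_p^')%N = (#|H|`_q)%N.
    apply: eq_in_partn => r rH; rewrite !inE.
    case/orP: (piH r rH) => /eqP->; first by rewrite eqxx (negbTE npq).
    by rewrite eqxx eq_sym npq.
  by rewrite (card_Hall sylP1) (card_Hall sylQ) -e partnC.
rewrite -defH mulg_nil //.
by rewrite (pgroup_nil (pHall_pgroup sylP1)) (pgroup_nil (pHall_pgroup sylQ)).
Qed.

Lemma S_to_N gT (G P : {group gT}) (p q : nat) : p.-Sylow(G) P ->
  q \in primes #|'N_G(P) / (P * 'C_G(P))| ->
  [exists H : {group gT}, (H \subset G) && schmidt_pq p q H].
Proof.
move=> sylP qN.
have qpr : prime q by move: qN; rewrite mem_primes => /andP[].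
have sPG := pHall_sub sylP.
have sPN : P \subset 'N_G(P) by rewrite subsetI sPG normG.
have sNG : 'N_G(P) \subset G := subsetIl _ _.
have sylPN : p.-Sylow('N_G(P)) P := pHall_subl sPN sNG sylP.
have nCN : 'N_G(P) \subset 'N('C_G(P)).
  by rewrite normsI ?(subset_trans sNG (normG G)) // norms_cent // subsetIr.
have nCP : P \subset 'N('C_G(P)) := subset_trans sPN nCN.
have defD : P * 'C_G(P) = (P <*> 'C_G(P))%G by rewrite /= norm_joinEl.
have nDN : 'N_G(P) \subset 'N(P <*> 'C_G(P)).
  by rewrite norm_joinEl // normsM // subsetIr.
rewrite defD in qN.
have qd : q %| #|'N_G(P) / (P <*> 'C_G(P))|.
  by move: qN; rewrite mem_primes => /and3P[].
have [xb Nxb oxb] := Cauchy qpr qd.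
case/morphimP: Nxb => y nDy Ny exb.
pose x := y.`_q.
have Nx : x \in 'N_G(P) by apply: subsetP (cycle_constt q y); rewrite cycle_subG.
have qx : q.-elt x := p_elt_constt q y.
have cx : coset (P <*> 'C_G(P)) x = xb.
  by rewrite /x morph_constt // -exb constt_p_elt // /p_elt oxb pnat_id.
have xD : x \notin P <*> 'C_G(P).
  apply/negP => xD; move: oxb; rewrite -cx coset_id // order1 => q1.
  by rewrite -q1 in qpr.
have [Gx NPx] : x \in G /\ x \in 'N(P) by apply/setIP.
have nqp : q != p.
  apply/eqP => eqp; case/negP: xD; apply: (subsetP (joing_subl _ _)).
  by rewrite (mem_normal_Hall sylPN (normalSG sPG) Nx) -eqp.
have nPx : <[x]> \subset 'N(P) by rewrite cycle_subG.
have sH0G : P <*> <[x]> \subset G by rewrite join_subG sPG cycle_subG.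
have nilH0 : ~~ nilpotent (P <*> <[x]>).
  apply/negP => nil.
  have cop : coprime #|P| #|<[x]>|.
    apply: (sub_pnat_coprime _ (pHall_pgroup sylP) qx).
    by move=> r; rewrite !inE => /eqP->.
  have := sub_nilpotent_cent2 nil (joing_subl P <[x]>) (joing_subr P <[x]>) cop.
  rewrite cycle_subG => cx'; case/negP: xD.
  by apply: (subsetP (joing_subr _ _)); rewrite inE Gx.
have [H /mingroupP[/andP[nnH sHH0] minH]] :=
  ex_mingroup (ex_intro (fun H : {group gT} => ~~ nilpotent H && (H \subset P <*> <[x]>))
                        (P <*> <[x]>)%G (introT andP (conj nilH0 (subxx _)))).
apply/existsP; exists H; rewrite (subset_trans sHH0 sH0G) /=.
rewrite /schmidt_pq nnH /=.
have piH0 : [pred r | (r == p) || (r == q)].-group (P <*> <[x]>).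
  rewrite norm_joinEr // pgroupM; apply/andP; split.
    by apply: sub_in_pnat (pHall_pgroup sylP) => r _; rewrite !inE => ->.
  by apply: sub_in_pnat qx => r _; rewrite !inE => ->; rewrite orbT.
have /andP[_ /allP piH] := pgroupS sHH0 piH0.
have nPH0 : P <| P <*> <[x]> by rewrite /normal joing_subl join_subG normG nPx.
have sylPH0 : p.-Sylow(P <*> <[x]>) P := pHall_subl (joing_subl _ _) sH0G sylP.
apply/and3P; split.
- apply/forallP => K; apply/implyP => pK; apply/idPn => nK.
  have := minH K; rewrite nK (subset_trans (proper_sub pK) sHH0).
  by move=> /(_ isT (proper_sub pK)) eKH; rewrite eKH properxx in pK.
- apply/and3P; split.
  + apply/idPn => npH; case/negP: nnH; apply: (pgroup_nil (p:=q)).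
    rewrite /pgroup /pnat cardG_gt0 /=; apply/allP => r rH.
    have := piH r rH; rewrite !inE; case/orP => [/eqP er|//].
    by rewrite -er rH in npH.
  + apply/idPn => nqH; case/negP: nnH; apply: (pgroup_nil (p:=p)).
    rewrite /pgroup /pnat cardG_gt0 /=; apply/allP => r rH.
    have := piH r rH; rewrite !inE; case/orP => [//|/eqP er].
    by rewrite -er rH in nqH.
  + by apply/allP => r rH; have := piH r rH; rewrite !inE.
- apply/existsP; exists (P :&: H)%G; rewrite inE.
  rewrite (setI_normal_Hall nPH0 sylPH0 sHH0) /=.
  by rewrite setIC (normalGI sHH0 nPH0).
Qed.

Theorem lemma4 (gT : finGroupType) (G : {group gT}) :
  has_sylow_tower G ->
  digraph_eq (sylow_graph G) (schmidt_graph G) /\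
  digraph_eq (schmidt_graph G) (hawkes_graph G).
Proof.
move=> tw; split; split => // p q /=;
  case pG: (p \in primes #|G|) => //=; case qG: (q \in primes #|G|) => //=;
  apply/idP/idP.
- by case/existsP => P /andP[sylP qN]; rewrite inE in sylP; exact: S_to_N sylP qN.
- by case/existsP => H /andP[sHG sch]; exact: H_to_S tw pG (N_to_H sHG sch).
- by case/existsP => H /andP[sHG sch]; exact: N_to_H sHG sch.
- move=> qO; have /existsP[P /andP[sylP qN]] := H_to_S tw pG qO.
  by rewrite inE in sylP; exact: S_to_N sylP qN.
Qed.
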